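(* Let $\sigma:\mathbb{R}\to\mathbb{R}$ be an increasing odd homeomorphism and let $(p_n=(x_n,y_n))_{n\geq0}$ be a sequence in $\mathbb{R}^2$ tending to $0$, such that either all the $x_n$ are nonzero and of the same sign, or all the $y_n$ are nonzero and of the same sign. Then the closure of $\{w(p_n):n\in\mathbb N,\ w\in\mathcal M_\sigma(X)\}$ contains: $Ox_+=\mathbb{R}_{\geq0}\times\{0\}$ if all $y_n>0$; $Ox_-=\mathbb{R}_{\leq0}\times\{0\}$ if all $y_n<0$; $Oy_+=\{0\}\times\mathbb{R}_{\geq0}$ if all $x_n>0$; $Oy_-=\{0\}\times\mathbb{R}_{\leq0}$ if all $x_n<0$.
   Context: $h_\sigma(x,y)=(x+\sigma^{-1}(y),y)$, $v_\sigma(x,y)=(x,\sigma(x)+y)$, and $\mathcal M_\sigma(X)$ is the monoid (containing the identity) generated by $h_\sigma$ and $v_\sigma$ under composition. *)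

(* Defs.v *)
From HB Require Import structures.
From mathcomp Require Import all_boot all_order all_algebra.
From mathcomp Require Import all_classical all_reals all_analysis.
Set Implicit Arguments. Unset Strict Implicit. Unset Printing Implicit Defensive.
Import Order.TTheory GRing.Theory Num.Theory.
Import numFieldNormedType.Exports.
Local Open Scope ring_scope.
Local Open Scope classical_set_scope.

Definition hmap {R : realType} (siginv : R -> R) (p : R * R) : R * R :=
  (p.1 + siginv p.2, p.2).

Definition vmap {R : realType} (sigma : R -> R) (p : R * R) : R * R :=
  (p.1, sigma p.1 + p.2).

(* The monoid M_sigma(X) generated by h_sigma and v_sigma under composition
   (containing the identity). *)
Inductive inM {R : realType} (sigma siginv : R -> R) : (R * R -> R * R) -> Prop :=
  | inM_id : inM sigma siginv id
  | inM_h w : inM sigma siginv w -> inM sigma siginv (hmap siginv \o w)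
  | inM_v w : inM sigma siginv w -> inM sigma siginv (vmap sigma \o w).

Definition orbit_set {R : realType} (sigma siginv : R -> R) (p : nat -> R * R)
  : set (R * R) :=
  [set q | exists n w, inM sigma siginv w /\ q = w (p n)].

(* Main.v *)
Require Import Defs.
From HB Require Import structures.
From mathcomp Require Import all_boot all_order all_algebra.
From mathcomp Require Import all_classical all_reals all_analysis.
From mathcomp Require Import ring lra.
Import Order.TTheory GRing.Theory Num.Theory.
Import numFieldNormedType.Exports.
Local Open Scope ring_scope.
Local Open Scope classical_set_scope.

Lemma core_pos (R : realType) (a x d eps : R) : 0 <= a -> 0 < d -> d < eps ->
  `|x| < eps -> exists k : nat, `|x + k%:R * d - a| < eps.
Proof.
move=> a0 d0 de xe.
case: (leP x a) => xa.
- have h : 0 <= (a - x) / d by apply: divr_ge0; lra.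
  have /andP [h1 h2] := truncn_itv h.
  exists (Num.truncn ((a - x) / d)).
  set k := Num.truncn _ in h1 h2 *.
  rewrite ler_pdivlMr // in h1.
  rewrite ltr_pdivrMr // in h2.
  rewrite -addn1 natrD mulrDl mul1r in h2.
  set t := k%:R * d in h1 h2 *.
  rewrite ltr_norml; apply/andP; split; lra.
- exists 0%N. rewrite mul0r addr0.
  have hx : x <= `|x| by apply: ler_norm.
  rewrite (@gtr0_norm _ (x - a)); lra.
Qed.

Lemma core_gen (R : realType) (a x d eps : R) :
  (0 <= a /\ 0 < d) \/ (a <= 0 /\ d < 0) -> `|d| < eps ->
  `|x| < eps -> exists k : nat, `|x + k%:R * d - a| < eps.
Proof.
move=> [[a0 d0]|[a0 d0]] de xe.
- apply: core_pos => //. by rewrite gtr0_norm in de.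
- have h1 : `|- x| < eps by rewrite normrN.
  have de' : - d < eps by move: de; rewrite ltr0_norm.
  have h3 : 0 <= - a by lra.
  have h4 : 0 < - d by lra.
  have [k hk] := @core_pos R (- a) (- x) (- d) eps h3 h4 de' h1.
  exists k. rewrite -normrN.
  have -> : - (x + k%:R * d - a) = - x + k%:R * - d - - a by rewrite mulrN; ring.
  exact: hk.
Qed.

Lemma closure_eps (R : realType) (A : set (R * R)) (q : R * R) :
  (forall eps, 0 < eps -> exists r, A r /\ `|q.1 - r.1| < eps /\ `|q.2 - r.2| < eps) ->
  closure A q.
Proof.
move=> H; rewrite /closure /= => B hB.
have [e e0 sub] := (nbhs_ballP _ _).1 hB.
have [r [Ar [h1 h2]]] := H e e0.
exists r; split => //; apply: sub; split; rewrite -ball_normE /=; done.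
Qed.

Lemma cont0 (R : realType) (f : R -> R) : continuous f -> f 0 = 0 ->
  forall eps, 0 < eps -> exists2 d, 0 < d & forall y, `|y| < d -> `|f y| < eps.
Proof.
move=> fc f0 eps e0.
have h : nbhs (0:R) (fun y => ball (f 0) eps (f y)).
  by apply: (cvg_ball (fc 0) e0); exact: _.
have [d d0 sub] := (nbhs_ballP _ _).1 h.
exists d => // y hy.
have := sub y; rewrite -!ball_normE /= f0 => hh.
have := hh; rewrite /ball_ /= => hh'. move: hh'. by rewrite !sub0r !normrN => /(_ hy).
Qed.

Lemma inM_iter_h (R : realType) (sigma siginv : R -> R) k :
  inM sigma siginv (iter k (hmap siginv)).
Proof.
elim: k => [|k IH]; first exact: inM_id.
have -> : iter k.+1 (hmap siginv) = hmap siginv \o iter k (hmap siginv).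
  by apply: funext => q.
exact: inM_h.
Qed.

Lemma inM_iter_v (R : realType) (sigma siginv : R -> R) k :
  inM sigma siginv (iter k (vmap sigma)).
Proof.
elim: k => [|k IH]; first exact: inM_id.
have -> : iter k.+1 (vmap sigma) = vmap sigma \o iter k (vmap sigma).
  by apply: funext => q.
exact: inM_v.
Qed.

Lemma iter_h_val (R : realType) (siginv : R -> R) k (q : R * R) :
  iter k (hmap siginv) q = (q.1 + k%:R * siginv q.2, q.2).
Proof.
case: q => x y; elim: k => [|k IH] /=; first by rewrite mul0r addr0.
rewrite IH /hmap /= -addn1 natrD mulrDl mul1r addrA //.
Qed.

Lemma iter_v_val (R : realType) (sigma : R -> R) k (q : R * R) :
  iter k (vmap sigma) q = (q.1, q.2 + k%:R * sigma q.1).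
Proof.
case: q => x y; elim: k => [|k IH] /=; first by rewrite mul0r addr0.
rewrite IH /vmap /= -addn1 natrD mulrDl mul1r; congr pair; ring.
Qed.

Theorem lemma4 (R : realType) (sigma siginv : R -> R)
  (Hinv1 : cancel sigma siginv) (Hinv2 : cancel siginv sigma)
  (Hcont : continuous sigma) (Hcontinv : continuous siginv)
  (Hincr : forall a b : R, a < b -> sigma a < sigma b)
  (Hodd : forall a : R, sigma (- a) = - sigma a)
  (p : nat -> R * R)
  (Hlim : p @ \oo --> ((0 : R), (0 : R)))
  (Hsign : ((forall n, 0 < (p n).1) \/ (forall n, (p n).1 < 0)) \/
           ((forall n, 0 < (p n).2) \/ (forall n, (p n).2 < 0))) :
  ((forall n, 0 < (p n).2) ->
     [set q : R * R | 0 <= q.1 /\ q.2 = 0] `<=` closure (orbit_set sigma siginv p)) /\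
  ((forall n, (p n).2 < 0) ->
     [set q : R * R | q.1 <= 0 /\ q.2 = 0] `<=` closure (orbit_set sigma siginv p)) /\
  ((forall n, 0 < (p n).1) ->
     [set q : R * R | q.1 = 0 /\ 0 <= q.2] `<=` closure (orbit_set sigma siginv p)) /\
  ((forall n, (p n).1 < 0) ->
     [set q : R * R | q.1 = 0 /\ q.2 <= 0] `<=` closure (orbit_set sigma siginv p)).
Proof.
have s0 : sigma 0 = 0 by have h := Hodd 0; rewrite oppr0 in h; lra.
have si0 : siginv 0 = 0 by rewrite -s0 Hinv1.
have sip : forall y, 0 < y -> 0 < siginv y.
  move=> y y0; case: (ltP 0 (siginv y)) => // h.
  move: h; rewrite le_eqVlt => /orP [/eqP e | l].
    by move: y0; rewrite -(Hinv2 y) e s0 ltxx.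
  by have := Hincr _ _ l; rewrite Hinv2 s0; lra.
have sin : forall y, y < 0 -> siginv y < 0.
  move=> y y0; case: (ltP (siginv y) 0) => // h.
  move: h; rewrite le_eqVlt => /orP [/eqP e | l].
    by move: y0; rewrite -(Hinv2 y) -e s0 ltxx.
  by have := Hincr _ _ l; rewrite Hinv2 s0; lra.
have sgp : forall x, 0 < x -> 0 < sigma x by move=> x x0; rewrite -s0; exact: Hincr.
have sgn : forall x, x < 0 -> sigma x < 0 by move=> x x0; rewrite -s0; exact: Hincr.
have Hev : forall eps, 0 < eps -> exists n, `|(p n).1| < eps /\ `|(p n).2| < eps /\
    `|siginv (p n).2| < eps /\ `|sigma (p n).1| < eps.
  move=> eps e0.
  have [d1 d10 H1] := @cont0 R siginv Hcontinv si0 eps e0.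
  have [d2 d20 H2] := @cont0 R sigma Hcont s0 eps e0.
  pose m := Num.min eps (Num.min d1 d2).
  have m0 : 0 < m by rewrite /m !lt_min e0 d10 d20.
  have hn : \forall n \near \oo, ball ((0:R), (0:R)) m (p n).
    by apply: (cvg_ball Hlim m0); exact: _.
  have [n [hb1 hb2]] := filter_ex hn.
  move: hb1 hb2; rewrite -!ball_normE /ball_ /= !sub0r !normrN => hb1 hb2.
  have : m <= eps by rewrite /m ge_min lexx.
  have : m <= d1 by rewrite /m !ge_min lexx orbT.
  have : m <= d2 by rewrite /m !ge_min lexx !orbT.
  move=> md2 md1 me.
  exists n; split; first lra.
  split; first lra.
  split; [apply: H1 | apply: H2]; lra.
split; [|split; [|split]].
- move=> Hy q [q1 q2]; apply: closure_eps => eps e0.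
  have [n [h1 [h2 [h3 h4]]]] := Hev eps e0.
  have [k hk] := @core_gen R q.1 (p n).1 (siginv (p n).2) eps
    (or_introl (conj q1 (sip _ (Hy n)))) h3 h1.
  exists (iter k (hmap siginv) (p n)); split.
    by exists n, (iter k (hmap siginv)); split => //; exact: inM_iter_h.
  by rewrite iter_h_val /= q2 sub0r normrN distrC.
- move=> Hy q [q1 q2]; apply: closure_eps => eps e0.
  have [n [h1 [h2 [h3 h4]]]] := Hev eps e0.
  have [k hk] := @core_gen R q.1 (p n).1 (siginv (p n).2) eps
    (or_intror (conj q1 (sin _ (Hy n)))) h3 h1.
  exists (iter k (hmap siginv) (p n)); split.
    by exists n, (iter k (hmap siginv)); split => //; exact: inM_iter_h.
  by rewrite iter_h_val /= q2 sub0r normrN distrC.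
- move=> Hx q [q1 q2]; apply: closure_eps => eps e0.
  have [n [h1 [h2 [h3 h4]]]] := Hev eps e0.
  have [k hk] := @core_gen R q.2 (p n).2 (sigma (p n).1) eps
    (or_introl (conj q2 (sgp _ (Hx n)))) h4 h2.
  exists (iter k (vmap sigma) (p n)); split.
    by exists n, (iter k (vmap sigma)); split => //; exact: inM_iter_v.
  by rewrite iter_v_val /= q1 sub0r normrN distrC.
- move=> Hx q [q1 q2]; apply: closure_eps => eps e0.
  have [n [h1 [h2 [h3 h4]]]] := Hev eps e0.
  have [k hk] := @core_gen R q.2 (p n).2 (sigma (p n).1) eps
    (or_intror (conj q2 (sgn _ (Hx n)))) h4 h2.
  exists (iter k (vmap sigma) (p n)); split.
    by exists n, (iter k (vmap sigma)); split => //; exact: inM_iter_v.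
  by rewrite iter_v_val /= q1 sub0r normrN distrC.
Qed.
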